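(* There exist a finite grid graph $G=P_a\square P_b$ (Cartesian product of two paths) and pebble distributions $D, D'$ on $G$ with $D(v)\le D'(v)$ for every vertex $v$, such that the covering ratio of $D'$ exceeds the covering ratio of $D$ by more than $1$, while the covering ratio ceiling of $D'$ is strictly smaller than the covering ratio ceiling of $D$.
   Context: A pebble distribution on a graph $G$ is a function $D:V(G)\to\mathbb{N}$; its size is $|D|=\sum_v D(v)$. A pebbling move along an edge $vu$ with $D(v)\ge 2$ removes two pebbles from $v$ and adds one pebble to $u$. A vertex $v$ is reachable under $D$ if $D(v)\ge 1$ or there is a sequence of pebbling moves whose last move places a pebble on $v$. The covering ratio of $D$ is (number of vertices reachable under $D$)$/|D|$. The weight function of $D$ is $W_D(u)=\sum_{v\in V(G)} D(v)2^{-d(u,v)}$, where $d$ is graph distance. The excess weight is $\widehat W_D(u)=W_D(u)-1$ if $W_D(u)>1$ and $\widehat W_D(u)=W_D(u)$ if $W_D(u)\le 1$. The covering ratio ceiling of $D$ is $\left(\sum_{v}W_D(v)-\sum_v \widehat W_D(v)\right)/\sum_v D(v)$. *)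

(* Defs.v *)
From HB Require Import structures.
From mathcomp Require Import all_boot all_order all_algebra.
From mathcomp Require Import boolp.
Set Implicit Arguments. Unset Strict Implicit. Unset Printing Implicit Defensive.
Import Order.TTheory GRing.Theory Num.Theory.

Section Pebbling.
Variable T : finType.
Variable e : rel T.

Definition psize (D : T -> nat) : nat := (\sum_(v : T) D v)%N.

Definition pmove (D D' : T -> nat) (v u : T) : Prop :=
  e v u /\ (2 <= D v)%N /\
  D' = (fun x => if x == v then (D x - 2)%N
                 else if x == u then (D x).+1 else D x).

Inductive pmoves : (T -> nat) -> (T -> nat) -> Prop :=
| pmoves_refl D : pmoves D D
| pmoves_step D D1 D2 v u : pmove D D1 v u -> pmoves D1 D2 -> pmoves D D2.

Definition reachable (D : T -> nat) (t : T) : Prop :=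
  (1 <= D t)%N \/
  exists D1 D2 v, pmoves D D1 /\ pmove D1 D2 v t.

Definition num_reachable (D : T -> nat) : nat :=
  #|[set t : T | `[< reachable D t >] ]|.

Local Open Scope ring_scope.

Definition covering_ratio (D : T -> nat) : rat :=
  (num_reachable D)%:R / (psize D)%:R.

(* Graph distance: the least n such that there is a walk of length n from
   u to v (searched among 0 .. #|T|-1; equals #|T| if v is unreachable
   from u, which never happens in a connected graph). *)
Definition has_walk (u v : T) (n : nat) : bool :=
  [exists p : n.-tuple T, path e u p && (last u p == v)].

Definition dist (u v : T) : nat := find (has_walk u v) (iota 0 #|T|).

Definition weight (D : T -> nat) (u : T) : rat :=
  \sum_(v : T) (D v)%:R * (2%:R^-1) ^+ (dist u v).

Definition excess_weight (D : T -> nat) (u : T) : rat :=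
  if 1 < weight D u then weight D u - 1 else weight D u.

Definition covering_ratio_ceiling (D : T -> nat) : rat :=
  (\sum_(v : T) weight D v - \sum_(v : T) excess_weight D v) / (psize D)%:R.

End Pebbling.

Definition path_adj (n : nat) : rel 'I_n :=
  fun i j => ((i.+1 == j :> nat) || (j.+1 == i :> nat)).

Definition grid (a b : nat) : rel ('I_a * 'I_b) :=
  fun x y => ((x.1 == y.1) && path_adj x.2 y.2) || ((x.2 == y.2) && path_adj x.1 y.1).
Arguments path_adj : clear implicits.
Arguments grid : clear implicits.

(* Main.v *)
Require Import Defs.
From HB Require Import structures.
From mathcomp Require Import all_boot all_order all_algebra.
From mathcomp Require Import zify ring lra.
From mathcomp Require Import boolp.
Import Order.TTheory GRing.Theory Num.Theory.
Set Implicit Arguments. Unset Strict Implicit. Unset Printing Implicit Defensive.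

Definition ad (x y : nat) := ((x - y) + (y - x))%N.
Definition man a b (u v : 'I_a * 'I_b) : nat := (ad u.1 v.1 + ad u.2 v.2)%N.

Lemma man_edge a b (u x y : 'I_a * 'I_b) : grid a b x y ->
  (man u y <= (man u x).+1)%N /\ (man u x <= (man u y).+1)%N.
Proof.
rewrite /grid /path_adj /man /ad.
case/orP => /andP [/eqP H1 H2]; rewrite H1; case/orP: H2 => /eqP H2; lia.
Qed.

Lemma man_path a b (u : 'I_a * 'I_b) x p : path (grid a b) x p ->
  (man u (last x p) <= man u x + size p)%N.
Proof.
elim: p x => [|y p IH] x /=; first by rewrite addn0.
case/andP => Hxy Hp. have := IH _ Hp. have [H _] := man_edge u Hxy. lia.
Qed.

Lemma man_refl a b (u : 'I_a * 'I_b) : man u u = 0%N.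
Proof. by rewrite /man /ad !subnn. Qed.

Lemma man_step a b (u v : 'I_a * 'I_b) : (0 < man u v)%N ->
  exists w, grid a b u w /\ man w v = (man u v).-1.
Proof.
case: u v => [[x1 H1] [x2 H2]] [[y1 K1] [y2 K2]]; rewrite /man /ad /= => Hm.
case: (ltngtP x1 y1) => C1.
- have L : (x1.+1 < a)%N by lia.
  exists (Ordinal L, Ordinal H2); split; last by rewrite /=; lia.
  rewrite /grid /path_adj /= eqxx /=. apply/orP; right; apply/orP; left; apply/eqP; lia.
- have L : (x1.-1 < a)%N by lia.
  exists (Ordinal L, Ordinal H2); split; last by rewrite /=; lia.
  rewrite /grid /path_adj /= eqxx /=. apply/orP; right; apply/orP; right; apply/eqP; lia.
case: (ltngtP x2 y2) => C2.
- have L : (x2.+1 < b)%N by lia.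
  exists (Ordinal H1, Ordinal L); split; last by rewrite /=; lia.
  rewrite /grid /path_adj /= eqxx /=. apply/orP; left; apply/orP; left; apply/eqP; lia.
- have L : (x2.-1 < b)%N by lia.
  exists (Ordinal H1, Ordinal L); split; last by rewrite /=; lia.
  rewrite /grid /path_adj /= eqxx /=. apply/orP; left; apply/orP; right; apply/eqP; lia.
- lia.
Qed.

Lemma man_walk a b n (u v : 'I_a * 'I_b) : man u v = n ->
  exists p : seq ('I_a * 'I_b), [/\ size p = n, path (grid a b) u p & last u p = v].
Proof.
elim: n u => [|n IH] u Hm.
  exists [::]; split => //=. case: u v Hm => [[x1 ?] [x2 ?]] [[y1 ?] [y2 ?]].
  rewrite /man /ad /= => Hm. have E1 : x1 = y1 by lia. have E2 : x2 = y2 by lia.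
  subst. by congr (_, _); apply: val_inj.
have [w [Huw Hw]] := man_step (v:=v) (u:=u) (ltac:(lia)).
have [p [Hs Hp Hl]] := IH w (ltac:(lia)).
exists (w :: p); split => /=; [by rewrite Hs | by rewrite Huw | by []].
Qed.

Lemma dist_man a b (u v : 'I_a * 'I_b) : dist (grid a b) u v = man u v.
Proof.
set P := has_walk (grid a b) u v.
have Hm : P (man u v).
  have [p [Hs Hp Hl]] := man_walk (erefl (man u v)).
  apply/existsP. have Hs' : size p == man u v by rewrite Hs.
  exists (Tuple Hs'). by rewrite /= Hp Hl eqxx.
have Hlow : forall n, (n < man u v)%N -> ~~ P n.
  move=> n Hn; apply/negP => /existsP [p /andP [Hp /eqP Hl]].
  have := man_path u Hp. rewrite Hl man_refl size_tuple. lia.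
have HN : (man u v < #|{: 'I_a * 'I_b}|)%N.
  rewrite card_prod !card_ord /man /ad.
  have := ltn_ord u.1; have := ltn_ord u.2; have := ltn_ord v.1; have := ltn_ord v.2.
  nia.
rewrite /dist.
have Hhas : has P (iota 0 #|{: 'I_a * 'I_b}|).
  apply/hasP; exists (man u v) => //. by rewrite mem_iota.
have Hf := Hhas. rewrite has_find size_iota in Hf.
have := nth_find 0%N Hhas. rewrite nth_iota // add0n => HP.
case: (ltngtP (find P (iota 0 #|{: 'I_a * 'I_b}|)) (man u v)) => C //.
- by have := Hlow _ C; rewrite HP.
- have := before_find 0%N C. by rewrite nth_iota // add0n Hm.
Qed.

Local Open Scope ring_scope.

Notation V := ('I_5 * 'I_5)%type.
Definition c : V := (@Ordinal 5 2 isT, @Ordinal 5 2 isT).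
Definition Dk (k : nat) : V -> nat := fun x => if x == c then k else 0%N.

Definition wm (D : V -> nat) (u : V) : rat :=
  \sum_(v : V) (D v)%:R * (2%:R^-1) ^+ (man u v).
Definition exm (D : V -> nat) (u : V) : rat :=
  if 1 < wm D u then wm D u - 1 else wm D u.

Lemma ceil_eq D : covering_ratio_ceiling (grid 5 5) D =
  (\sum_(v : V) wm D v - \sum_(v : V) exm D v) / (psize D)%:R.
Proof.
have E : forall u, weight (grid 5 5) D u = wm D u.
  by move=> u; apply: eq_bigr => v _; rewrite dist_man.
rewrite /covering_ratio_ceiling /excess_weight.
congr ((_ - _) / _); apply: eq_bigr => v _; by rewrite /exm !E.
Qed.


Lemma sum_pt (R : nmodType) (F : V -> R) : \sum_(v : V) (if v == c then F v else 0) = F c.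
Proof. by rewrite -big_mkcond big_pred1_eq. Qed.

Lemma psize_Dk k : psize (Dk k) = k.
Proof. rewrite /psize /Dk. have := @sum_pt nat (fun _ => k). by []. Qed.

Lemma wm_Dk k u : wm (Dk k) u = k%:R * (2%:R^-1) ^+ (man u c).
Proof.
rewrite /wm -(sum_pt (fun v => k%:R * (2%:R^-1) ^+ (man u v))).
apply: eq_bigr => v _; rewrite /Dk; case: eqP => _ //. by rewrite mul0r.
Qed.

Lemma half_bound n : (2%:R^-1 : rat) ^+ n.+2 <= 4%:R^-1.
Proof.
rewrite !exprS mulrA.
have H : (2%:R^-1 : rat) ^+ n <= 1 by apply: exprn_ile1; lra.
have H0 : 0 <= (2%:R^-1 : rat) ^+ n by apply: exprn_ge0; lra.
have -> : (2%:R^-1 * 2%:R^-1 : rat) = 4%:R^-1 by field.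
lra.
Qed.

Lemma gt1_iff k n : (k = 3 \/ k = 4)%N ->
  (1 < k%:R * (2%:R^-1 : rat) ^+ n) = (n <= 1)%N.
Proof.
move=> Hk. case: n => [|[|n]].
- rewrite expr0 mulr1 ltr1n. by case: Hk => ->.
- rewrite expr1. by case: Hk => ->.
- have := half_bound n. have H0 : 0 <= (2%:R^-1 : rat) ^+ n.+2 by apply: exprn_ge0; lra.
  move=> H. apply/negbTE. rewrite -leNgt.
  case: Hk => -> /=; lra.
Qed.

Lemma card5 : (\sum_(v : V) nat_of_bool (man v c <= 1)%N)%N = 5%N.
Proof.
rewrite -(pair_big xpredT xpredT (fun i j => nat_of_bool (man (i, j) c <= 1)%N)) /=.
by rewrite !big_ord_recl !big_ord0.
Qed.

Lemma ceil_Dk k : (k = 3 \/ k = 4)%N -> covering_ratio_ceiling (grid 5 5) (Dk k) = 5%:R / k%:R.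
Proof.
move=> Hk. rewrite ceil_eq psize_Dk -sumrB.
congr (_ / _).
rewrite (eq_bigr (fun v => (nat_of_bool (man v c <= 1)%N)%:R)); last first.
  move=> v _. rewrite /exm wm_Dk gt1_iff //. case: ifP => _; rewrite ?subrr //.
  by rewrite opprB addrC subrK.
by rewrite -natr_sum card5.
Qed.

Lemma ceil_cmp : covering_ratio_ceiling (grid 5 5) (Dk 4) < covering_ratio_ceiling (grid 5 5) (Dk 3).
Proof.
rewrite ceil_Dk; last by right. rewrite ceil_Dk; last by left.
rewrite ltr_pM2l //.
Qed.


Lemma grid_irr (x : V) : grid 5 5 x x = false.
Proof. rewrite /grid /path_adj !eqxx /=. apply/negbTE. rewrite !negb_or. apply/andP; split; apply/andP; split; apply/eqP; lia. Qed.

Lemma sum_pt' (R : nmodType) (p : V) (F : V -> R) : \sum_(v : V) (if v == p then F v else 0) = F p.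
Proof. by rewrite -big_mkcond big_pred1_eq. Qed.

Definition h (n : nat) : rat := (2%:R^-1) ^+ n.

Lemma h_ge0 n : 0 <= h n. Proof. apply: exprn_ge0; lra. Qed.

Lemma h_edge n m : (m <= n.+1)%N -> h n <= 2%:R * h m.
Proof.
move=> H. case: m H => [|m] H.
  have H1 : h 0 = 1 by rewrite /h expr0.
  have : h n <= 1 by apply: exprn_ile1; lra.
  rewrite H1. lra.
have E : 2%:R * h m.+1 = h m by rewrite /h exprS mulrA mulfV ?mul1r.
rewrite E /h. apply: ler_wiXn2l. all: try lra. all: lia.
Qed.

Lemma move_dec D D1 v u t : pmove (grid 5 5) D D1 v u -> wm D1 t <= wm D t.
Proof.
case=> [He [H2 ->]].
have Hvu : (u == v) = false by apply/negbTE; apply/eqP => E; move: He; rewrite E grid_irr.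
have E : wm (fun x => if x == v then (D x - 2)%N else if x == u then (D x).+1 else D x) t =
   wm D t + \sum_(x : V) (if x == v then - 2%:R * h (man t v) else 0)
          + \sum_(x : V) (if x == u then h (man t u) else 0).
  rewrite /wm -!big_split /=. apply: eq_bigr => x _.
  case: (eqVneq x v) => [->|Hxv]; first by rewrite ?eqxx natrB //= eq_sym Hvu /h; ring.
  case: (eqVneq x u) => [->|Hxu]; last by rewrite !addr0.
  rewrite ?eqxx -addn1 natrD /h. ring.
rewrite E (sum_pt' v (fun _ => - 2%:R * h (man t v))) (sum_pt' u (fun _ => h (man t u))).
have := man_edge t He => [[_ Hm]].
have := h_edge Hm. lra.
Qed.

Lemma moves_dec D D1 t : pmoves (grid 5 5) D D1 -> wm D1 t <= wm D t.
Proof.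
elim=> [D0|D0 D2 D3 v u Hm _ IH]; first by [].
apply: le_trans IH _. exact: move_dec Hm.
Qed.

Lemma wm_ge D t : (1 <= D t)%N -> 1 <= wm D t.
Proof.
move=> H. rewrite /wm (bigD1 t) //= man_refl expr0 mulr1.
have H0 : 0 <= \sum_(i | i != t) (D i)%:R * (2%:R^-1 : rat) ^+ man t i.
  apply: sumr_ge0 => i _. apply: mulr_ge0 => //. apply: exprn_ge0; lra.
have : (1 : rat) <= (D t)%:R by rewrite ler1n.
lra.
Qed.

Lemma reach_wm D t : reachable (grid 5 5) D t -> 1 <= wm D t.
Proof.
case=> [H|[D1 [D2 [v [Hms Hm]]]]]; first exact: wm_ge.
apply: le_trans (moves_dec t Hms).
apply: le_trans (move_dec t Hm).
apply: wm_ge. case: Hm => [He [_ ->]].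
have Htv : (t == v) = false by apply/negbTE; apply/eqP => E; move: He; rewrite E grid_irr.
by rewrite Htv eqxx.
Qed.

Lemma card_pred (P : pred V) : #|[set t | P t]| = (\sum_(t : V) nat_of_bool (P t))%N.
Proof. rewrite -sum1_card big_mkcond /=. apply: eq_bigr => t _. by rewrite inE; case: (P t). Qed.

Lemma reach_D3 : (num_reachable (grid 5 5) (Dk 3) <= 5)%N.
Proof.
rewrite /num_reachable. apply: (@leq_trans #|[set t : V | (man t c <= 1)%N]|); last by rewrite card_pred card5.
apply: subset_leq_card.
apply/subsetP => t. rewrite !inE => /asboolP /reach_wm.
rewrite wm_Dk. case: (man t c) => [|[|n]] //.
have := half_bound n. have := h_ge0 n.+2. rewrite /h. lra.
Qed.


Definition mv (D : V -> nat) (v u : V) : V -> nat :=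
  fun x => if x == v then (D x - 2)%N else if x == u then (D x).+1 else D x.

Lemma mvP D v u : grid 5 5 v u -> (2 <= D v)%N -> pmove (grid 5 5) D (mv D v u) v u.
Proof. by move=> He H; split. Qed.

Lemma one_step D v t : grid 5 5 v t -> (2 <= D v)%N -> reachable (grid 5 5) D t.
Proof. move=> He H; right; exists D, (mv D v t), v; split; [constructor|exact: mvP]. Qed.

Lemma neq_edge v u : grid 5 5 v u -> (u == v) = false.
Proof. move=> He; apply/negbTE; apply/eqP => E; move: He; by rewrite E grid_irr. Qed.

Lemma two_step D v w t : grid 5 5 v w -> grid 5 5 w t -> (4 <= D v)%N -> reachable (grid 5 5) D t.
Proof.
move=> H1 H2 H. right. exists (mv (mv D v w) v w), (mv (mv (mv D v w) v w) w t), w.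
have Hw := neq_edge H1.
split; last first.
  apply: mvP => //. by rewrite /mv Hw eqxx.
apply: (pmoves_step (mvP H1 _)); first lia.
apply: (pmoves_step (mvP H1 _)); last constructor.
rewrite /mv eqxx. lia.
Qed.

Lemma man_sym (u v : V) : man u v = man v u.
Proof. rewrite /man /ad; lia. Qed.

Lemma man0 (u v : V) : man u v = 0%N -> u = v.
Proof.
case: u v => [[x1 ?] [x2 ?]] [[y1 ?] [y2 ?]].
rewrite /man /ad /= => Hm. have E1 : x1 = y1 by lia. have E2 : x2 = y2 by lia.
subst. by congr (_, _); apply: val_inj.
Qed.

Lemma reach_D4_t t : (man t c <= 2)%N -> reachable (grid 5 5) (Dk 4) t.
Proof.
rewrite man_sym => H.
have HD : Dk 4 c = 4%N by rewrite /Dk eqxx.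
case E: (man c t) H => [|[|[|n]]] // _.
- left. by rewrite -(man0 E) HD.
- have [[|w [|? ?]] [Hs Hp Hl]] := man_walk E => //=.
  move: Hp Hl => /= /andP [Hw _] Hl. subst w. apply: (one_step Hw). by rewrite HD.
- have [[|w [|w' [|? ?]]] [Hs Hp Hl]] := man_walk E => //=.
  move: Hp Hl => /= /andP [Hw /andP [Hw' _]] Hl. subst w'.
  apply: (two_step Hw Hw'). by rewrite HD.
Qed.

Lemma card13 : (\sum_(v : V) nat_of_bool (man v c <= 2)%N)%N = 13%N.
Proof.
rewrite -(pair_big xpredT xpredT (fun i j => nat_of_bool (man (i, j) c <= 2)%N)) /=.
by rewrite !big_ord_recl !big_ord0.
Qed.

Lemma reach_D4 : (13 <= num_reachable (grid 5 5) (Dk 4))%N.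
Proof.
rewrite /num_reachable. apply: (@leq_trans #|[set t : V | (man t c <= 2)%N]|); first by rewrite card_pred card13.
apply: subset_leq_card.
apply/subsetP => t. rewrite !inE => H. apply/asboolP. exact: reach_D4_t.
Qed.

Theorem mainTheorem3 :
  exists (a b : nat) (D D' : 'I_a * 'I_b -> nat),
    (forall v, (D v <= D' v)%N) /\
    (0 < psize D)%N /\
    covering_ratio (grid a b) D + 1 < covering_ratio (grid a b) D' /\
    covering_ratio_ceiling (grid a b) D' < covering_ratio_ceiling (grid a b) D.
Proof.
exists 5%N, 5%N, (Dk 3), (Dk 4). split; first by move=> v; rewrite /Dk; case: ifP.
split; first by rewrite psize_Dk.
split; last exact: ceil_cmp.
rewrite /covering_ratio !psize_Dk.
have H3 : ((num_reachable (grid 5 5) (Dk 3))%:R : rat) <= 5%:R by rewrite ler_nat reach_D3.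
have H4 : (13%:R : rat) <= (num_reachable (grid 5 5) (Dk 4))%:R by rewrite ler_nat reach_D4.
lra.
Qed.
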